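(* Let $T \ge 1$ and $E \ge 0$ be integers, let $f \in \mathbb{R}[x]$ have at most $T$ nonzero terms, and let $\xi_1, \dots, \xi_{2T+2E}$ be distinct positive real numbers. Suppose we are given values $y_i = f(\xi_i) + \epsilon_i$, $1 \le i \le 2T+2E$, where $\epsilon_i \in \mathbb{R}$ and at most $E$ of the $\epsilon_i$ are nonzero. If $g \in \mathbb{R}[x]$ has at most $T$ nonzero terms and satisfies $g(\xi_i) = y_i$ for at least $2T+E$ indices $i$, then $g = f$. *)

(* Defs.v *)
From mathcomp Require Import all_boot all_order all_algebra.
From mathcomp Require Import reals.
Set Implicit Arguments. Unset Strict Implicit. Unset Printing Implicit Defensive.
Import Order.TTheory GRing.Theory Num.Theory.
Local Open Scope ring_scope.

Definition nterms (R : nzRingType) (p : {poly R}) : nat :=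
  #|[set i : 'I_(size p) | p`_i != 0]|.

(* Main.v *)
Require Import Defs.
From mathcomp Require Import all_boot all_order all_algebra.
From mathcomp Require Import reals.
From mathcomp Require Import polyorder polyrcf.
Import Order.TTheory GRing.Theory Num.Theory.
Local Open Scope ring_scope.

Section Desc.
Variable R : realType.

Definition nz (p : {poly R}) (n : nat) : nat := (\sum_(i < n) ((p`_i != 0)%R : nat))%N.

Lemma nz_widen (p : {poly R}) n : (size p <= n)%N -> nz p n = nz p (size p).
Proof.
move=> hn; rewrite /nz -(subnKC hn) big_split_ord /= [X in (_ + X)%N]big1 ?addn0 //.
by move=> i _; rewrite nth_default ?eqxx // leq_addr.
Qed.

Lemma ntermsE (p : {poly R}) : nterms p = nz p (size p).
Proof.
rewrite /nterms /nz cardsE -sum1_card big_mkcond /=.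
by apply: eq_bigr => i _; rewrite unfold_in; case: (_ != 0).
Qed.

Lemma nz0 (p : {poly R}) n : (size p <= n)%N -> nz p n = 0%N -> p = 0.
Proof.
move=> hs /eqP; rewrite sum_nat_eq0 => /forallP h.
apply/polyP => i; rewrite coef0.
have [hi|hi] := ltnP i n.
  by have := h (Ordinal hi); rewrite /= eqb0 negbK => /eqP.
by rewrite nth_default // (leq_trans hs).
Qed.

Lemma rolle_list (p : {poly R}) x s :
  path <%R x s -> root p x -> all (root p) s ->
  exists t, [/\ size t = size s, sorted <%R t, all (fun c => x < c) t &
                all (root p^`()) t].
Proof.
elim: s x => [|y s IH] x /=; first by exists [::].
move=> /andP[xy ps] rx /andP[ry rs].
have [t [st sot hat rt]] := IH y ps ry rs.
have [c /itvP hc dc] : {c | c \in `]x, y[ & p^`().[c] = 0}.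
  by apply: poly_rolle => //; rewrite (rootP rx) (rootP ry).
exists (c :: t); split => //=.
- by rewrite st.
- rewrite (path_sortedE lt_trans) sot andbT; apply/allP => z /(allP hat) yz.
  by rewrite (lt_trans _ yz) // hc.
- rewrite hc /=; apply/allP => z /(allP hat) yz; exact: lt_trans xy yz.
- by rewrite rt andbT; apply/rootP.
Qed.

Lemma desc n : forall (p : {poly R}) k (s : seq R), (size p <= n)%N -> p != 0 ->
  (nz p n <= k.+1)%N -> uniq s -> all (fun x => 0 < x) s -> all (root p) s ->
  (size s <= k)%N.
Proof.
elim: n => [|n IH] p k s hs p0 hnz us ps rs.
  by move: p0; rewrite -size_poly_eq0 -leqn0 hs.
have [c0|c0] := eqVneq p`_0 0.
  have dX : ('X %| p)%R by rewrite -(subr0 'X) dvdp_XsubCl /root horner_coef0 c0.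
  set q := p %/ 'X.
  have pq : p = q * 'X by rewrite divpK.
  have q0 : q != 0 by apply: contraNneq p0 => h; rewrite pq h mul0r.
  apply: (IH q k s) => //.
  - by move: hs; rewrite pq size_mulX.
  - move: hnz; rewrite /nz big_ord_recl /= pq coefMX /= eqxx /= add0n.
    by under eq_bigr do rewrite coefMX /=.
  - apply/allP => x xs; have := allP rs x xs; have := allP ps x xs.
    rewrite pq /root hornerMX mulf_eq0 => xp /orP[//|/eqP x0].
    by rewrite x0 ltxx in xp.
have [d0|d0] := eqVneq p^`() 0.
  have : (size p <= 1)%N.
    by move: d0 => /eqP; rewrite -size_poly_eq0 size_deriv; case: (size p) => [|[|]].
  move=> /size1_polyC pC; case: s us ps rs => [|x s] //= _ _ /andP[rx _].
  by move: rx; rewrite pC /root hornerC (negbTE c0).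
have hnz' : (nz p^`() n <= k)%N.
  move: hnz; rewrite /nz big_ord_recl /= c0 add1n ltnS.
  congr (_ <= _)%N; apply: eq_bigr => i _.
  by rewrite coef_deriv mulrn_eq0 /=.
case: k hnz hnz' => [|k] _ hnz'.
  have hsd : (size p^`() <= n)%N by rewrite size_deriv; case: (size p) hs.
  by move: d0; rewrite (nz0 _ _ hsd) ?eqxx //; apply/eqP; rewrite -leqn0.
set s' := sort <=%R s.
have pss : perm_eq s' s by rewrite perm_sort.
have ss : sorted <%R s'.
  by rewrite lt_sorted_uniq_le (perm_uniq pss) us sort_le_sorted.
rewrite -(perm_size pss).
case E : s' ss => [|x s2] //= ps2.
have mx : x \in s by rewrite -(perm_mem pss) E mem_head.
have rs2 : all (root p) s2.
  by apply/allP => z zs; apply: (allP rs); rewrite -(perm_mem pss) E inE zs orbT.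
have [t [st sot hat rt]] := @rolle_list p x s2 ps2 (allP rs x mx) rs2.
rewrite ltnS -st; apply: (IH p^`() k t) => //.
- by rewrite size_deriv; case: (size p) hs.
- exact: lt_sorted_uniq.
- apply/allP => z /(allP hat) xz; exact: lt_trans (allP ps x mx) xz.
Qed.

End Desc.
Arguments nz {R}.

Theorem corollary2 (R : realType) (T E : nat) (hT : (1 <= T)%N)
  (f : {poly R}) (hf : (nterms f <= T)%N)
  (xi : 'I_(2 * T + 2 * E) -> R) (xi_inj : injective xi)
  (xi_pos : forall i, 0 < xi i)
  (eps : 'I_(2 * T + 2 * E) -> R)
  (heps : (#|[set i | (eps i != 0)%R]| <= E)%N)
  (g : {poly R}) (hg : (nterms g <= T)%N)
  (hagree : (2 * T + E <= #|[set i | (g.[xi i] == f.[xi i] + eps i)%R]|)%N) :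
  g = f.
Proof.
apply/eqP; rewrite -subr_eq0; apply/negPn/negP => d0.
set n := maxn (size g) (size f).
have hsd : (size (g - f)%R <= n)%N.
  by rewrite (leq_trans (size_polyD _ _)) // size_polyN.
have hnz : (nz (g - f)%R n <= (2 * T).-1.+1)%N.
  rewrite prednK ?muln_gt0 //.
  apply: (@leq_trans (nz g n + nz f n)).
    rewrite /nz -big_split /=; apply: leq_sum => i _.
    rewrite coefB; have [->|_] := eqVneq (g`_i) 0; have [->|_] := eqVneq (f`_i) 0;
      rewrite ?subr0 ?sub0r ?subrr ?eqxx /= ?add0n ?addn0 //.
    - exact: leq_b1.
    - exact: leq_b1.
    - exact: leq_trans (leq_b1 _) (leq_addr _ _).
  rewrite mul2n -addnn leq_add //.
    by rewrite nz_widen ?leq_maxl // -ntermsE.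
  by rewrite nz_widen ?leq_maxr // -ntermsE.
set A := [set i | g.[xi i] == f.[xi i] + eps i] :\: [set i | eps i != 0].
have cA : (2 * T <= #|A|)%N.
  rewrite cardsD; apply: (@leq_trans (2 * T + E - E)); first by rewrite addnK.
  apply: leq_sub => //; apply: leq_trans heps; apply: subset_leq_card; exact: subsetIr.
have := @desc R n (g - f)%R _ (map xi (enum A)) hsd d0 hnz.
rewrite size_map -cardE => h.
have h2 : (#|A| <= (2 * T).-1)%N.
  apply: h.
  - by rewrite map_inj_uniq ?enum_uniq.
  - by apply/allP => x /mapP[i _ ->]; apply: xi_pos.
  apply/allP => x /mapP[i]; rewrite mem_enum !inE negbK => /andP[/eqP e0 /eqP hi] ->.
  by rewrite /root hornerD hornerN hi e0 addr0 subrr.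
have := leq_trans cA h2.
by rewrite leqNgt ltn_predL muln_gt0 hT.
Qed.
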